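(* Let $X$ satisfy (P1) and (P2), let $\alpha$ be a saddle connection on $X$ which is neither a side nor a diagonal, and consider a maximal run of consecutive adjacent segments in the polygonal decomposition of $\alpha$. If two segments of this run lie in the same polygon and have the same sign, then the run contains an even number of segments.
   Context: $X$ is a translation surface obtained from finitely many Euclidean polygons by gluing pairs of parallel sides of equal length by translations, with (P1): each polygon convex with all angles obtuse or right; (P2): no two sides of the same polygon are identified. Saddle connection: straight segment between singularities (images of vertices) with none in its interior; a diagonal is a segment inside a polygon joining two non-adjacent vertices. Polygonal decomposition: cut $\alpha$ each time it passes from one polygon to another, giving consecutive (oriented) segments $\alpha_1,\dots,\alpha_k$, each in one polygon. A segment in polygon $P$ is adjacent if it goes from the relative interior of a side $e$ of $P$ to the relative interior of a side adjacent to $e$; otherwise non-adjacent. Labeling the sides of each polygon $P$ in cyclic clockwise order $e_1,\dots,e_N$, an adjacent segment in $P$ has positive sign if it goes from some $e_u$ to $e_{u+1}$ and negative sign if it goes from $e_u$ to $e_{u-1}$. *)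

(* Defs.v *)
(* Translation surfaces built from finitely many convex
   Euclidean polygons glued along parallel sides of equal length. *)
From HB Require Import structures.
From mathcomp Require Import all_boot all_order all_algebra.
From mathcomp Require Import reals.
Set Implicit Arguments. Unset Strict Implicit. Unset Printing Implicit Defensive.
Import Order.TTheory GRing.Theory Num.Theory.
Local Open Scope ring_scope.

Section PolySurf.
Variable R : realType.

Definition pt := (R * R)%type.
Definition padd (p q : pt) : pt := (p.1 + q.1, p.2 + q.2).
Definition psub (p q : pt) : pt := (p.1 - q.1, p.2 - q.2).
Definition pscale (t : R) (p : pt) : pt := (t * p.1, t * p.2).
Definition cross (p q : pt) : R := p.1 * q.2 - p.2 * q.1.
Definition dot (p q : pt) : R := p.1 * q.1 + p.2 * q.2.

(* Raw data of a polygon gluing: [np] polygons; polygon [j] has [ns j]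
   vertices [vtx j 0, ..., vtx j (ns j - 1)] listed in clockwise cyclic
   order; side [u] of polygon [j] goes from [vtx j u] to [vtx j (u+1)].
   [glue] pairs each side with the side it is identified with. *)
Record polysurf := PolySurf {
  np : nat;
  ns : 'I_np -> nat;
  vtx : forall j : 'I_np, 'I_(ns j) -> pt;
  glue : {j : 'I_np & 'I_(ns j)} -> {j : 'I_np & 'I_(ns j)}
}.

Variable X : polysurf.

Definition side := {j : 'I_(np X) & 'I_(ns j)}.
Definition mkside (j : 'I_(np X)) (u : 'I_(ns j)) : side := existT _ j u.
Definition side_start (s : side) : pt := vtx (tagged s).
Definition side_end (s : side) : pt := vtx (ordS (tagged s)).
Definition side_vec (s : side) : pt := psub (side_end s) (side_start s).
Definition snext (s : side) : side := existT _ (tag s) (ordS (tagged s)).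
Definition sprev (s : side) : side := existT _ (tag s) (ord_pred (tagged s)).

(* strict convexity with clockwise orientation: every vertex not on side u
   lies strictly to the right of the oriented line of side u *)
Definition convex_cw (j : 'I_(np X)) : Prop :=
  forall u w : 'I_(ns j), w != u -> w != ordS u ->
    cross (side_vec (mkside u)) (psub (vtx w) (vtx u)) < 0.

(* every interior angle is obtuse or right (>= pi/2) *)
Definition angles_obtuse_or_right (j : 'I_(np X)) : Prop :=
  forall u : 'I_(ns j),
    0 <= dot (side_vec (mkside u)) (side_vec (mkside (ordS u))).

(* the gluing is a pairing of sides by translations: glued sides are
   parallel, of equal length, with opposite orientation (both polygons
   being clockwise) *)
Definition valid_gluing : Prop :=
  (forall s : side, glue (glue s) = s) /\
  (forall s : side, side_vec (glue s) = pscale (-1) (side_vec s)).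

Definition P1 : Prop :=
  forall j : 'I_(np X), (3 <= ns j)%N /\ convex_cw j /\ angles_obtuse_or_right j.

Definition P2 : Prop := forall s : side, tag (glue s) != tag s.

Definition in_poly_interior (j : 'I_(np X)) (p : pt) : Prop :=
  forall u : 'I_(ns j), cross (side_vec (mkside u)) (psub p (vtx u)) < 0.

Definition in_side_interior (s : side) (p : pt) : Prop :=
  exists t : R, 0 < t < 1 /\ p = padd (side_start s) (pscale t (side_vec s)).

(* translation carrying side s onto the side glued to it
   (side_start s is identified with side_end (glue s)) *)
Definition glue_transl (s : side) : pt := psub (side_end (glue s)) (side_start s).

(* An oriented saddle connection alpha, given through its polygonal
   decomposition alpha_0, ..., alpha_(k-1): segment alpha_i lies in polygon
   [P i] and goes from [a i] to [b i]; for i < k-1 it leaves [P i] through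
   the relative interior of the side [ex i] of [P i] and re-enters in
   polygon [P (i+1)] = the polygon of [glue (ex i)] at the translated point;
   all segments have the same direction [d]; alpha starts and ends at
   vertices (singularities) and has no singularity in its interior. *)
Definition is_side_segment (j : 'I_(np X)) (p q : pt) : Prop :=
  exists s : side, tag s = j /\
    ((p = side_start s /\ q = side_end s) \/ (p = side_end s /\ q = side_start s)).

Definition saddle_connection (k : nat) (P : nat -> 'I_(np X))
    (a b : nat -> pt) (ex : nat -> side) (d : pt) : Prop :=
  [/\ (1 <= k)%N /\ d != (0, 0),
      (forall i, (i < k)%N -> exists l : R, 0 < l /\ psub (b i) (a i) = pscale l d),
      ((exists u, a 0%N = @vtx X (P 0%N) u) /\ (exists u, b (k.-1) = @vtx X (P (k.-1)) u)),
      (forall i, (i.+1 < k)%N ->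
         [/\ tag (ex i) = P i, in_side_interior (ex i) (b i),
             P i.+1 = tag (glue (ex i)) &
             a i.+1 = padd (b i) (glue_transl (ex i))]) &
      (forall i, (i < k)%N ->
         (forall t : R, 0 < t < 1 ->
            in_poly_interior (P i) (padd (a i) (pscale t (psub (b i) (a i)))))
         \/ (k = 1%N /\ is_side_segment (P i) (a i) (b i)))].

Definition sc_is_side (k : nat) (P : nat -> 'I_(np X)) (a b : nat -> pt) : Prop :=
  k = 1%N /\ is_side_segment (P 0%N) (a 0%N) (b 0%N).

Definition sc_is_diagonal (k : nat) (P : nat -> 'I_(np X)) (a b : nat -> pt) : Prop :=
  k = 1%N /\ exists u w : 'I_(ns (P 0%N)),
    [/\ a 0%N = vtx u, b 0%N = vtx w, w != u, w != ordS u & u != ordS w].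

(* segment i (0 < i < k-1) enters P i through the side glue (ex (i-1)) and
   leaves it through the side ex i *)
Definition seg_positive (k : nat) (ex : nat -> side) (i : nat) : Prop :=
  [/\ (0 < i)%N, (i.+1 < k)%N & ex i = snext (glue (ex i.-1))].
Definition seg_negative (k : nat) (ex : nat -> side) (i : nat) : Prop :=
  [/\ (0 < i)%N, (i.+1 < k)%N & ex i = sprev (glue (ex i.-1))].
(* adjacent segment: from the relative interior of a side to the relative
   interior of an adjacent side (the first and last segments start/end at
   a vertex, hence are never adjacent) *)
Definition seg_adjacent (k : nat) (ex : nat -> side) (i : nat) : Prop :=
  seg_positive k ex i \/ seg_negative k ex i.

Definition maximal_adjacent_run (k : nat) (ex : nat -> side) (i j : nat) : Prop :=
  [/\ (i <= j)%N, (j < k)%N,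
      (forall l, (i <= l <= j)%N -> seg_adjacent k ex l),
      ((0 < i)%N -> ~ seg_adjacent k ex i.-1) &
      ((j.+1 < k)%N -> ~ seg_adjacent k ex j.+1)].

End PolySurf.

(* Main.v *)
Require Import Defs.
From mathcomp Require Import all_boot all_order all_algebra reals.
From mathcomp Require Import ring lra zify.
Set Implicit Arguments. Unset Strict Implicit. Unset Printing Implicit Defensive.
Import Order.TTheory GRing.Theory Num.Theory.
Local Open Scope ring_scope.

Lemma sgn_lem1 (R : realType) (T Y B A H C : R) :
  T < 0 -> T * Y = B * A - H * C -> B < 0 -> A < 0 -> H < 0 -> 0 < C -> Y < 0.
Proof. move=> *. nra. Qed.

Lemma idA (R : realType) (v1 v2 d : pt R) :
  cross v1 v2 * dot v1 d = - cross v2 d * dot v1 v1 + cross v1 d * dot v1 v2.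
Proof. case: v1 v2 d => [a1 a2] [b1 b2] [c1 c2]; rewrite /cross /dot /=; ring. Qed.
Lemma idB (R : realType) (v1 v2 d : pt R) :
  cross v1 v2 * dot v2 d = - cross v2 d * dot v1 v2 + cross v1 d * dot v2 v2.
Proof. case: v1 v2 d => [a1 a2] [b1 b2] [c1 c2]; rewrite /cross /dot /=; ring. Qed.
Lemma dot_pos (R : realType) (v d : pt R) : cross v d != 0 -> 0 < dot v v.
Proof.
case: v d => [a1 a2] [c1 c2]; rewrite /cross /dot /= => h.
rewrite lt_neqAle; apply/andP; split; last by nra.
apply/eqP => h0. have : a1 * a1 = 0 by nra.
move/eqP; rewrite mulf_eq0 orbb => /eqP e1.
have : a2 * a2 = 0 by nra.
move/eqP; rewrite mulf_eq0 orbb => /eqP e2.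
by move: h; rewrite e1 e2 !mul0r subrr eqxx.
Qed.

Lemma L_pos (R : realType) (v1 v2 d : pt R) : cross v1 v2 < 0 -> cross v1 d < 0 ->
  0 < cross v2 d -> 0 <= dot v1 v2 -> 0 < dot v1 d /\ 0 < dot v2 d.
Proof.
move=> T C1 C2 P.
have N1 := dot_pos (ltr0_neq0 C1). have N2 := dot_pos (lt0r_neq0 C2).
have ia := idA v1 v2 d. have ib := idB v1 v2 d.
split.
- rewrite -(nmulr_rlt0 _ T) ia mulNr.
  have := mulr_gt0 C2 N1. have := mulr_le0_ge0 (ltW C1) P. lra.
- rewrite -(nmulr_rlt0 _ T) ib mulNr.
  have := mulr_ge0 (ltW C2) P. have h0 : 0 < - cross v1 d by rewrite oppr_gt0.
  have := mulr_gt0 h0 N2; rewrite mulNr oppr_gt0. lra.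
Qed.

Lemma L_neg (R : realType) (v1 v2 d : pt R) : cross v1 v2 < 0 -> 0 < cross v1 d ->
  cross v2 d < 0 -> 0 <= dot v1 v2 -> dot v1 d < 0 /\ dot v2 d < 0.
Proof.
move=> T C1 C2 P.
have N1 := dot_pos (lt0r_neq0 C1). have N2 := dot_pos (ltr0_neq0 C2).
have ia := idA v1 v2 d. have ib := idB v1 v2 d.
split.
- rewrite -(nmulr_rgt0 _ T) ia mulNr.
  have h0 : 0 < - cross v2 d by rewrite oppr_gt0.
  have := mulr_gt0 h0 N1; rewrite mulNr oppr_gt0. have := mulr_ge0 (ltW C1) P. lra.
- rewrite -(nmulr_rgt0 _ T) ib mulNr.
  have := mulr_le0_ge0 (ltW C2) P. have := mulr_gt0 C1 N2. lra.
Qed.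

Lemma cross_point (R : realType) (S E A D : pt R) :
  cross D (psub S A) * cross D (psub E A) < 0 ->
  exists tau, 0 < tau < 1 /\ cross D (psub (padd S (pscale tau (psub E S))) A) = 0.
Proof.
set hS := cross D (psub S A); set hE := cross D (psub E A) => h.
have nz : hS - hE != 0.
  apply/eqP => e. have : hS = hE by apply/eqP; rewrite -subr_eq0 e.
  move=> e'; move: h; rewrite e'. have := sqr_ge0 hE; rewrite expr2. lra.
exists (hS / (hS - hE)); split.
  have [hs|hs] : (hS < 0 /\ 0 < hE) \/ (0 < hS /\ hE < 0).
    case: (ltgtP hS 0) => a; case: (ltgtP hE 0) => c; try nra; by [left | right].
  - case: hs => h1 h2. apply/andP; split.
      by rewrite -divrNN; apply: divr_gt0; lra.
      rewrite -divrNN ltr_pdivrMr ?mul1r; lra.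
  - case: hs => h1 h2. apply/andP; split.
      by apply: divr_gt0 => //; lra.
      rewrite ltr_pdivrMr ?mul1r; lra.
have -> : cross D (psub (padd S (pscale (hS / (hS - hE)) (psub E S))) A)
   = hS + (hS / (hS - hE)) * (hE - hS).
  rewrite /hS /hE /cross /psub /padd /pscale /=; ring.
have -> : hE - hS = - (hS - hE) by ring.
by rewrite mulrN divfK // subrr.
Qed.

Section Poly.
Variable R : realType.
Variable X : polysurf R.
Hypothesis HP1 : P1 X.

Lemma ns3 (j : 'I_(np X)) : (3 <= ns j)%N.
Proof. by case: (HP1 j). Qed.

Lemma ordS_neq (j : 'I_(np X)) (u : 'I_(ns j)) : ordS u != u.
Proof.
apply/eqP => /(congr1 val) /=. have := ns3 j. have := ltn_ord u.
move: (ns j) u => n u. rewrite /=.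
case: (ltngtP u.+1 n) => h1 h2 h3.
- rewrite modn_small //; lia.
- lia.
- rewrite h1 modnn => h; lia.
Qed.

Lemma ordS2_neq (j : 'I_(np X)) (u : 'I_(ns j)) : ordS (ordS u) != u.
Proof.
apply/eqP => /(congr1 val) /=. have := ns3 j. have := ltn_ord u.
move: (ns j) u => n u /= h1 h2.
have [h|h] : (u.+1 < n \/ u.+1 = n)%N by lia.
- rewrite (modn_small h).
  have [h'|h'] : (u.+2 < n \/ u.+2 = n)%N by lia.
  + rewrite modn_small //; lia.
  + rewrite h' modnn; lia.
- rewrite h modnn modn_small; lia.
Qed.

Definition svu (j : 'I_(np X)) (u : 'I_(ns j)) := side_vec (mkside u).

Lemma svuE (j : 'I_(np X)) (u : 'I_(ns j)) : svu u = psub (vtx (ordS u)) (vtx u).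
Proof. by []. Qed.

Lemma convex (j : 'I_(np X)) (u w : 'I_(ns j)) : w != u -> w != ordS u ->
  cross (svu u) (psub (vtx w) (vtx u)) < 0.
Proof. by case: (HP1 j) => _ [H _]; apply: H. Qed.

Lemma closed_hp (j : 'I_(np X)) (u w : 'I_(ns j)) :
  cross (svu u) (psub (vtx w) (vtx u)) <= 0.
Proof.
case: (eqVneq w u) => [->|h1].
  rewrite svuE; case: (vtx (ordS u)) => x1 x2; case: (vtx u) => y1 y2.
  rewrite /cross /psub /=. rewrite le_eqVlt; apply/orP; left; apply/eqP; ring.
case: (eqVneq w (ordS u)) => [->|h2].
  rewrite svuE; case: (vtx (ordS u)) => x1 x2; case: (vtx u) => y1 y2.
  rewrite /cross /psub /=. rewrite le_eqVlt; apply/orP; left; apply/eqP; ring.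
by apply/ltW/convex.
Qed.

Lemma turn (j : 'I_(np X)) (u : 'I_(ns j)) : cross (svu u) (svu (ordS u)) < 0.
Proof.
have h1 := ordS2_neq u.
have h2 : ordS (ordS u) != ordS u by rewrite (inj_eq (@ordS_inj _)) ordS_neq.
have := convex h1 h2. rewrite !svuE.
case: (vtx (ordS (ordS u))) => x1 x2; case: (vtx (ordS u)) => y1 y2; case: (vtx u) => z1 z2.
rewrite /cross /psub /=. congr (_ < _). ring.
Qed.

Lemma obtuse (j : 'I_(np X)) (u : 'I_(ns j)) : 0 <= dot (svu u) (svu (ordS u)).
Proof. by case: (HP1 j) => _ [_ H]; apply: H. Qed.

Lemma height_lt (j : 'I_(np X)) (e : pt R) (u : 'I_(ns j)) :
  cross (svu u) e < 0 -> 0 < cross (svu (ordS u)) e ->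
  forall w, w != ordS u -> cross e (psub (vtx w) (vtx (ordS u))) < 0.
Proof.
move=> H1 H2 w hw.
case: (eqVneq w u) => [->|hwu].
  clear H2; move: H1; rewrite svuE; case: e => e1 e2;
  case: (vtx (ordS u)) => x1 x2; case: (vtx u) => y1 y2.
  rewrite /cross /psub /= => H1. lra.
case: (eqVneq w (ordS (ordS u))) => [->|hw2].
  clear H1; move: H2; rewrite svuE; case: e => e1 e2;
  case: (vtx (ordS (ordS u))) => x1 x2; case: (vtx (ordS u)) => y1 y2.
  rewrite /cross /psub /= => H2. lra.
have c1 := convex hwu hw.
have c2 := convex hw hw2.
have T := turn u.
apply: (sgn_lem1 T _ c2 H1 c1 H2).
rewrite !svuE /cross /psub /=. ring.
Qed.

Lemma height_max (j : 'I_(np X)) (e : pt R) (u1 u2 : 'I_(ns j)) :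
  cross (svu u1) e < 0 -> 0 < cross (svu (ordS u1)) e ->
  cross (svu u2) e < 0 -> 0 < cross (svu (ordS u2)) e -> u1 = u2.
Proof.
move=> H1 H2 H3 H4. apply/ordS_inj/eqP. apply/negPn/negP => hne.
have A1 : cross e (psub (vtx (ordS u2)) (vtx (ordS u1))) < 0.
  by apply: (height_lt H1 H2); rewrite eq_sym.
have A2 : cross e (psub (vtx (ordS u1)) (vtx (ordS u2))) < 0.
  by apply: (height_lt H3 H4).
move: A1 A2; rewrite /cross /psub /=. lra.
Qed.

Definition bnd (j : 'I_(np X)) (y : pt R) :=
  exists s : side X, tag s = j /\ cross (side_vec s) (psub y (side_start s)) = 0.

Lemma side_turn (s : side X) :
  cross (side_vec s) (side_vec (snext s)) < 0 /\ 0 <= dot (side_vec s) (side_vec (snext s)).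
Proof. case: s => j u. split; [exact: turn | exact: obtuse]. Qed.

Lemma snext_sprev (s : side X) : snext (sprev s) = s.
Proof. by case: s => j u; rewrite /snext /sprev /= ord_predK. Qed.

Lemma sprev_snext (s : side X) : sprev (snext s) = s.
Proof. by case: s => j u; rewrite /snext /sprev /= ordSK. Qed.

Lemma side_unique (e : pt R) (s1 s2 : side X) : tag s1 = tag s2 ->
  cross (side_vec s1) e < 0 -> 0 < cross (side_vec (snext s1)) e ->
  cross (side_vec s2) e < 0 -> 0 < cross (side_vec (snext s2)) e -> s1 = s2.
Proof.
case: s1 => j1 u1; case: s2 => j2 u2 /= Ht; subst j2 => H1 H2 H3 H4.
by rewrite (height_max H1 H2 H3 H4).
Qed.

Lemma int_side (j : 'I_(np X)) y (s : side X) :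
  in_poly_interior j y -> tag s = j -> cross (side_vec s) (psub y (side_start s)) < 0.
Proof. case: s => j' u /= H Ht; subst j'. exact: H. Qed.

Lemma closed_side (j : 'I_(np X)) (s s' : side X) y (tau : R) : tag s = j -> tag s' = j ->
  0 <= tau <= 1 -> y = padd (side_start s') (pscale tau (side_vec s')) ->
  cross (side_vec s) (psub y (side_start s)) <= 0.
Proof.
case: s => j1 u; case: s' => j2 u' /= H1 H2; subst j1 j2 => /andP[t0 t1] ->.
have c1 := closed_hp u u'. have c2 := closed_hp u (ordS u').
move: c1 c2; rewrite !svuE /side_vec /side_start /side_end /cross /psub /padd /pscale /= => c1 c2.
set A := (_ * _ - _ * _) in c1. set B := (_ * _ - _ * _) in c2.
have -> : ((vtx (ordS u)).1 - (vtx u).1) *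
    ((vtx u').2 + tau * ((vtx (ordS u')).2 - (vtx u').2) - (vtx u).2) -
    ((vtx (ordS u)).2 - (vtx u).2) *
    ((vtx u').1 + tau * ((vtx (ordS u')).1 - (vtx u').1) - (vtx u).1)
  = (1 - tau) * A + tau * B by rewrite /A /B; ring.
nra.
Qed.

Lemma side_int_uniq (s1 s2 : side X) y : tag s1 = tag s2 ->
  in_side_interior s1 y -> in_side_interior s2 y -> s1 = s2.
Proof.
case: s1 => j u1; case: s2 => j2 u2 /= Ht; subst j2.
move=> [t1 [/andP[t10 t11] E1]] [t2 [/andP[t20 t21] E2]].
case: (eqVneq u1 u2) => [-> //| hne]. exfalso.
have c1 := closed_hp u1 u2. have c2 := closed_hp u1 (ordS u2).
have key : cross (svu u1) (psub (vtx u2) (vtx u1)) < 0 \/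
           cross (svu u1) (psub (vtx (ordS u2)) (vtx u1)) < 0.
  case: (eqVneq u2 (ordS u1)) => [e|h].
    right; apply: convex; rewrite e; first exact: ordS2_neq.
    by rewrite (inj_eq (@ordS_inj _)) ordS_neq.
  by left; apply: convex; rewrite // eq_sym.
have h1 : cross (svu u1) (psub y (vtx u1)) = 0.
  rewrite E1 !svuE /side_vec /side_start /side_end /cross /psub /padd /pscale /=; ring.
have h2 : cross (svu u1) (psub y (vtx u1)) = (1 - t2) * cross (svu u1) (psub (vtx u2) (vtx u1))
    + t2 * cross (svu u1) (psub (vtx (ordS u2)) (vtx u1)).
  rewrite E2 !svuE /side_vec /side_start /side_end /cross /psub /padd /pscale /=; ring.
move: h1 h2 c1 c2 key.
set A := cross _ (psub (vtx u2) _). set B := cross _ (psub (vtx (ordS u2)) _).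
move=> -> h2 c1 c2 [k|k]; nra.
Qed.

Lemma vtx_not_side_int (j : 'I_(np X)) (w : 'I_(ns j)) (s : side X) :
  tag s = j -> in_side_interior s (vtx w) -> False.
Proof.
case: s => j' u /= Ht; subst j'. move=> [t [/andP[t0 t1] E]].
have T := turn u.
have h1 : cross (svu u) (psub (vtx w) (vtx u)) = 0.
  rewrite E !svuE /side_vec /side_start /side_end /cross /psub /padd /pscale /=; ring.
case: (eqVneq w u) => [ew|hw1]; last first.
  case: (eqVneq w (ordS u)) => [ew|hw2]; last by have := convex hw1 hw2; rewrite h1 ltxx.
  move: E T; rewrite ew !svuE /side_vec /side_start /side_end /cross /psub /padd /pscale /=.
  case: (vtx (ordS u)) => x1 x2; case: (vtx u) => y1 y2 /= [E1 E2].
  have e1 : (1 - t) * (x1 - y1) = 0 by rewrite mulrBl mul1r {1}E1; ring.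
  have e2 : (1 - t) * (x2 - y2) = 0 by rewrite mulrBl mul1r {1}E2; ring.
  move: e1 e2 => /eqP; rewrite mulf_eq0 !subr_eq0 [1 == t]eq_sym (lt_eqF t1) /= => /eqP ->.
  move=> /eqP; rewrite mulf_eq0 !subr_eq0 [1 == t]eq_sym (lt_eqF t1) /= => /eqP ->.
  by rewrite !subrr !mul0r subrr ltxx.
move: E T; rewrite ew !svuE /side_vec /side_start /side_end /cross /psub /padd /pscale /=.
case: (vtx (ordS u)) => x1 x2; case: (vtx u) => y1 y2 /= [E1 E2].
have e1 : t * (x1 - y1) = 0 by apply: (addrI y1); rewrite addr0 -E1.
have e2 : t * (x2 - y2) = 0 by apply: (addrI y2); rewrite addr0 -E2.
move: e1 e2 => /eqP; rewrite mulf_eq0 subr_eq0 (gt_eqF t0) /= => /eqP ->.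
move=> /eqP; rewrite mulf_eq0 subr_eq0 (gt_eqF t0) /= => /eqP ->.
by rewrite !subrr !mul0r subrr ltxx.
Qed.


Lemma side_int_bnd (s : side X) y : in_side_interior s y -> bnd (tag s) y.
Proof.
move=> [t [_ ->]]. exists s; split => //.
rewrite /cross /psub /padd /pscale /=; ring.
Qed.

Lemma vtx_bnd (j : 'I_(np X)) (w : 'I_(ns j)) : bnd j (vtx w).
Proof.
exists (mkside w); split => //. rewrite /cross /psub /=; ring.
Qed.

Lemma dir_nz (v D : pt R) : cross v D < 0 -> 0 < dot D D.
Proof.
case: v D => v1 v2 [d1 d2]; rewrite /cross /dot /= => h.
have id : (v1 * d2 - v2 * d1) ^+ 2 + (v1 * d1 + v2 * d2) ^+ 2 = (v1 ^+ 2 + v2 ^+ 2) * (d1 * d1 + d2 * d2) by ring.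
rewrite lt_neqAle; apply/andP; split; last by nra.
apply/eqP => h0. move: id; rewrite -h0 mulr0.
set c := v1 * d2 - v2 * d1. set e := v1 * d1 + v2 * d2. move=> id.
have : 0 < c ^+ 2 by rewrite exprn_even_gt0 //= lt_eqF.
nra.
Qed.

Lemma collin (D e : pt R) : cross D e = 0 -> 0 < dot D D ->
  e = pscale (dot e D / dot D D) D.
Proof.
case: D e => d1 d2 [e1 e2]; rewrite /cross /dot /pscale /= => hc n0.
have nz : d1 * d1 + d2 * d2 != 0 by rewrite gt_eqF.
congr pair.
- rewrite mulrAC; apply/(mulIf nz); rewrite divfK //.
  have -> : (e1 * d1 + e2 * d2) * d1 = e1 * (d1 * d1 + d2 * d2) + d2 * (d1 * e2 - d2 * e1) by ring.
  by rewrite hc mulr0 addr0.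
- rewrite mulrAC; apply/(mulIf nz); rewrite divfK //.
  have -> : (e1 * d1 + e2 * d2) * d2 = e2 * (d1 * d1 + d2 * d2) - d1 * (d1 * e2 - d2 * e1) by ring.
  by rewrite hc mulr0 subr0.
Qed.

Lemma chord (j : 'I_(np X)) (A B D y : pt R) (l tau : R) (s : side X) :
  0 < l -> psub B A = pscale l D ->
  (forall t, 0 < t < 1 -> in_poly_interior j (padd A (pscale t (psub B A)))) ->
  bnd j A -> tag s = j -> 0 <= tau <= 1 ->
  y = padd (side_start s) (pscale tau (side_vec s)) ->
  cross (side_vec s) D < 0 -> cross D (psub y A) = 0 -> y = A.
Proof.
move=> l0 hBA hint [s' [hs' hbnd]] hs htau hy hsD hyA.
have n0 := dir_nz hsD.
move: (collin hyA n0); move: (dot (psub y A) D / dot D D) => t hc.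
have hy2 : y = padd A (pscale t D).
  rewrite -hc; rewrite /padd /psub /=; case: y {hy hyA hc} => y1 y2 /=; congr pair; ring.
set z := padd A (pscale (l / 2) D).
have hz : in_poly_interior j z.
  have -> : z = padd A (pscale (1/2) (psub B A)) by rewrite hBA /z /padd /pscale /=; congr pair; ring.
  apply: hint; apply/andP; split; lra.
have cz := int_side hz hs.
have cy : cross (side_vec s) (psub y (side_start s)) = 0.
  rewrite hy /cross /psub /padd /pscale /=; ring.
have rel : cross (side_vec s) (psub z (side_start s)) =
   cross (side_vec s) (psub y (side_start s)) + (l / 2 - t) * cross (side_vec s) D.
  rewrite hy2 /z /cross /psub /padd /pscale /=; ring.
have ht : 0 < l / 2 - t by nra.
case: (ltgtP t 0) => tc.
- exfalso.
  have cy' := closed_side hs' hs htau hy.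
  have cz' := int_side hz hs'.
  have rel' : (l / 2 - t) * cross (side_vec s') (psub A (side_start s')) =
     (l / 2) * cross (side_vec s') (psub y (side_start s')) - t * cross (side_vec s') (psub z (side_start s')).
    rewrite hy2 /z /cross /psub /padd /pscale /=; ring.
  move: rel'; rewrite hbnd mulr0. nra.
- exfalso.
  have : in_poly_interior j y.
    have -> : y = padd A (pscale (t / l) (psub B A)).
      rewrite hBA hy2 /padd /pscale /=; congr pair; field; lra.
    apply: hint; apply/andP; split.
      by apply: divr_gt0.
    by rewrite ltr_pdivrMr // mul1r; lra.
  move=> hyi. have := int_side hyi hs. by rewrite cy ltxx.
- by rewrite hy2 tc /padd /pscale /=; case: (A) => ? ?; rewrite /= !mul0r !addr0.
Qed.

End Poly.

Section Main.
Variable R : realType.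
Variable X : polysurf R.
Hypothesis HG : valid_gluing X.
Hypothesis HP1 : P1 X.
Variables (k : nat) (P : nat -> 'I_(np X)) (a b : nat -> pt R) (ex : nat -> side X) (d : pt R).
Hypothesis HSC : saddle_connection k P a b ex d.

Lemma glueK (s : side X) : glue (glue s) = s.
Proof. by case: HG => H _; apply: H. Qed.

Lemma glue_vec (s : side X) : side_vec (glue s) = pscale (-1) (side_vec s).
Proof. by case: HG => _ H; apply: H. Qed.

Lemma sc_dir m : (m < k)%N -> exists l, 0 < l /\ psub (b m) (a m) = pscale l d.
Proof. by case: HSC => _ H _ _ _; apply: H. Qed.

Lemma sc_tr m : (m.+1 < k)%N -> [/\ tag (ex m) = P m, in_side_interior (ex m) (b m),
  P m.+1 = tag (glue (ex m)) & a m.+1 = padd (b m) (glue_transl (ex m))].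
Proof. by case: HSC => _ _ _ H _; apply: H. Qed.

Lemma sc_int m : (1 < k)%N -> (m < k)%N -> forall t, 0 < t < 1 ->
  in_poly_interior (P m) (padd (a m) (pscale t (psub (b m) (a m)))).
Proof.
case: HSC => _ _ _ _ H k1 mk t ht. case: (H m mk) => [H'|[k1' _]]; first exact: H'.
by move: k1; rewrite k1'.
Qed.

Lemma sc_start : exists u, a 0%N = @vtx R X (P 0%N) u.
Proof. by case: HSC => _ _ [H _] _ _. Qed.

Lemma sc_end : exists u, b k.-1 = @vtx R X (P k.-1) u.
Proof. by case: HSC => _ _ [_ H] _ _. Qed.

Definition w m := side_vec (ex m).
Definition Dd m := dot (w m) d.

Lemma exit_cross m : (m.+1 < k)%N -> 0 < cross (w m) d.
Proof.
move=> mk.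
have k1 : (1 < k)%N by apply: leq_ltn_trans mk.
have mk' : (m < k)%N by apply: ltnW.
case: (sc_tr mk) => Ht [tau [_ hb]] _ _.
case: (sc_dir mk') => l [l0 hl].
have hx := sc_int k1 mk' (t := 1/2) ltac:(apply/andP; split; lra).
have := int_side hx Ht.
have ha : a m = psub (b m) (pscale l d).
  by rewrite -hl /psub; case: (a m) (b m) => [? ?] [? ?] /=; congr pair; ring.
have -> : cross (side_vec (ex m)) (psub (padd (a m) (pscale (1 / 2) (psub (b m) (a m)))) (side_start (ex m)))
  = - ((l / 2) * cross (w m) d).
  rewrite hl ha hb /w /cross /psub /padd /pscale /=; by field.
rewrite oppr_lt0 => h. have l2 : 0 < l / 2 by lra. by rewrite -(pmulr_rgt0 _ l2).
Qed.
Lemma dotN (v e : pt R) : dot (pscale (-1) v) e = - dot v e.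
Proof. rewrite /dot /pscale /=; ring. Qed.
Lemma crossN (v e : pt R) : cross (pscale (-1) v) e = - cross v e.
Proof. rewrite /cross /pscale /=; ring. Qed.

Lemma crossNr (v e : pt R) : cross v (pscale (-1) e) = - cross v e.
Proof. rewrite /cross /pscale /=; ring. Qed.

Lemma entry_side m : (m.+1 < k)%N -> in_side_interior (glue (ex m)) (a m.+1).
Proof.
move=> mk; case: (sc_tr mk) => _ [tau [/andP[t0 t1] hb]] _ ha.
exists (1 - tau); split; first (apply/andP; split; lra).
rewrite ha hb /glue_transl.
have e1 : side_end (glue (ex m)) = padd (side_start (glue (ex m))) (side_vec (glue (ex m))).
  rewrite /side_vec; case: (side_end _) (side_start _) => [? ?] [? ?]; rewrite /padd /psub /=; congr pair; ring.
rewrite e1 glue_vec /padd /pscale /psub /=. congr pair; ring.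
Qed.

Lemma entry_cross m : (m.+1 < k)%N -> cross (side_vec (glue (ex m))) d < 0.
Proof. move=> mk; have := exit_cross mk; rewrite glue_vec crossN /w; lra. Qed.

Lemma pos_sign m : seg_positive k ex m -> Dd m.-1 < 0 /\ 0 < Dd m.
Proof.
case=> m0 mk E.
have mk1 : (m.-1.+1 < k)%N by rewrite prednK //; apply: ltnW.
have C1 := entry_cross mk1.
have C2 := exit_cross mk.
case: (side_turn HP1 (glue (ex m.-1))) => T Pd.
move: C2; rewrite /w E => C2.
case: (L_pos T C1 C2 Pd) => h1 h2; split; last by rewrite /Dd /w E.
by move: h1; rewrite glue_vec dotN /Dd; lra.
Qed.

Lemma neg_sign m : seg_negative k ex m -> 0 < Dd m.-1 /\ Dd m < 0.
Proof.
case=> m0 mk E.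
have mk1 : (m.-1.+1 < k)%N by rewrite prednK //; apply: ltnW.
have C2 := entry_cross mk1.
have C1 := exit_cross mk.
case: (side_turn HP1 (sprev (glue (ex m.-1)))) => T Pd.
rewrite snext_sprev in T Pd.
move: C1; rewrite /w E => C1.
case: (L_neg T C1 C2 Pd) => h1 h2; split; last by rewrite /Dd /w E.
by move: h2; rewrite glue_vec dotN /Dd; lra.
Qed.

Lemma opp_step l : seg_adjacent k ex l -> (0 < Dd l) = ~~ (0 < Dd l.-1).
Proof.
case=> [/pos_sign [h1 h2]|/neg_sign [h1 h2]].
  by rewrite h2 lt_gtF.
by rewrite h1 lt_gtF.
Qed.

Lemma parity i n : (forall l, (i <= l <= i + n)%N -> seg_adjacent k ex l) ->
  (0 < Dd (i + n)) = odd n.+1 (+) (0 < Dd i.-1).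
Proof.
elim: n => [|n IH] H.
  by rewrite addn0 (opp_step (H i _)) ?leqnn ?addn0 //=.
rewrite addnS (opp_step (H (i + n).+1 _)); last by rewrite -addnS leq_addr leqnn.
rewrite /= IH; first by rewrite -addNb oddS.
move=> l /andP[h1 h2]; apply: H; rewrite h1 /=; apply: (leq_trans h2); rewrite leq_add2l.
exact: leqnSn.
Qed.

Lemma bnd_a m : (m < k)%N -> bnd (P m) (a m).
Proof.
case: m => [|m] mk.
  by case: sc_start => u ->; apply: vtx_bnd.
case: (sc_tr mk) => _ _ Ht _.
rewrite Ht; apply: side_int_bnd; exact: entry_side.
Qed.

Lemma bnd_b m : (m < k)%N -> bnd (P m) (b m).
Proof.
move=> mk. case: (ltnP m.+1 k) => h.
  case: (sc_tr h) => Ht hb _ _. rewrite -Ht; exact: side_int_bnd.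
have e : m = k.-1 by lia.
by rewrite e; case: sc_end => u ->; apply: vtx_bnd.
Qed.

Lemma a_side m s : (m < k)%N -> tag s = P m -> in_side_interior s (a m) ->
  (0 < m)%N /\ s = glue (ex m.-1).
Proof.
case: m => [|m] mk Ht hs.
  by case: sc_start => u e; rewrite e in hs; case: (vtx_not_side_int HP1 Ht hs).
split => //. case: (sc_tr mk) => _ _ Ht' _.
apply: (side_int_uniq HP1 _ hs (entry_side mk)). by rewrite Ht Ht'.
Qed.

Lemma b_side m s : (m < k)%N -> tag s = P m -> in_side_interior s (b m) ->
  (m.+1 < k)%N /\ s = ex m.
Proof.
move=> mk Ht hs. case: (ltnP m.+1 k) => h.
  split => //. case: (sc_tr h) => Ht' hb _ _.
  apply: (side_int_uniq HP1 _ hs hb). by rewrite Ht Ht'.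
have e : m = k.-1 by lia.
rewrite e in Ht hs; case: sc_end => u e'; rewrite e' in hs. by case: (vtx_not_side_int HP1 Ht hs).
Qed.

Lemma enter_at m s : (1 < k)%N -> (m < k)%N -> tag s = P m -> cross (side_vec s) d < 0 ->
  cross d (psub (side_start s) (a m)) < 0 -> 0 < cross d (psub (side_end s) (a m)) ->
  in_side_interior s (a m).
Proof.
move=> k1 mk Ht hsD h1 h2.
have hp : cross d (psub (side_start s) (a m)) * cross d (psub (side_end s) (a m)) < 0.
  by rewrite pmulr_llt0.
case: (cross_point hp) => tau [ht hy].
case: (sc_dir mk) => l [l0 hl].
exists tau; split => //.
symmetry. apply: (chord HP1 l0 hl (sc_int k1 mk) (bnd_a mk) Ht (tau := tau)) => //.
by case/andP: ht => t0 t1; apply/andP; split; apply: ltW.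
Qed.

Lemma exit_at m s : (1 < k)%N -> (m < k)%N -> tag s = P m -> 0 < cross (side_vec s) d ->
  0 < cross d (psub (side_start s) (a m)) -> cross d (psub (side_end s) (a m)) < 0 ->
  in_side_interior s (b m).
Proof.
move=> k1 mk Ht hsD h1 h2.
have hp : cross d (psub (side_start s) (a m)) * cross d (psub (side_end s) (a m)) < 0.
  by rewrite pmulr_rlt0.
case: (cross_point hp) => tau [ht hy].
case: (sc_dir mk) => l [l0 hl].
exists tau; split => //.
symmetry. apply: (chord HP1 (A := b m) (B := a m) (D := pscale (-1) d) l0 _ _ (bnd_b mk) Ht (tau := tau)).
- by rewrite /psub /pscale /=; move: hl; rewrite /psub /pscale /= => -[e1 e2]; congr pair; lra.
- move=> t ht'.
  have -> : padd (b m) (pscale t (psub (a m) (b m))) = padd (a m) (pscale (1 - t) (psub (b m) (a m))).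
    by rewrite /padd /pscale /psub /=; congr pair; ring.
  apply: (sc_int k1 mk); case/andP: ht' => t0 t1; apply/andP; split; lra.
- by case/andP: ht => t0 t1; apply/andP; split; apply: ltW.
- by [].
- by rewrite crossNr; lra.
- move: hy; have : cross d (psub (b m) (a m)) = 0 by rewrite hl /cross /pscale /=; ring.
  rewrite /cross /psub /padd /pscale /= => e1 e2. rewrite -e2. lra.
Qed.

Lemma shift_b m x : (m < k)%N -> cross d (psub x (b m)) = cross d (psub x (a m)).
Proof.
move=> mk; case: (sc_dir mk) => l [_ hl].
have eb : b m = padd (a m) (pscale l d).
  by rewrite -hl /padd /psub; case: (a m) (b m) => [? ?] [? ?] /=; congr pair; ring.
rewrite eb /cross /psub /padd /pscale /=; ring.
Qed.

Lemma hb_start m : (m.+1 < k)%N -> 0 < cross d (psub (side_start (ex m)) (a m)).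
Proof.
move=> mk; have mk' : (m < k)%N by apply: ltnW.
case: (sc_tr mk) => _ [tau [/andP[t0 t1] hb]] _ _.
rewrite -(shift_b _ mk').
have -> : cross d (psub (side_start (ex m)) (b m)) = tau * cross (w m) d.
  by rewrite hb /w /cross /psub /padd /pscale /=; ring.
by apply: mulr_gt0 => //; apply: exit_cross.
Qed.

Lemma hb_end m : (m.+1 < k)%N -> cross d (psub (side_end (ex m)) (a m)) < 0.
Proof.
move=> mk; have mk' : (m < k)%N by apply: ltnW.
case: (sc_tr mk) => _ [tau [/andP[t0 t1] hb]] _ _.
rewrite -(shift_b _ mk').
have -> : cross d (psub (side_end (ex m)) (b m)) = - ((1 - tau) * cross (w m) d).
  by rewrite hb /w /side_vec /cross /psub /padd /pscale /=; ring.
rewrite oppr_lt0; apply: mulr_gt0; [lra | exact: exit_cross].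
Qed.

Lemma ha_start m : (m.+1 < k)%N -> cross d (psub (side_start (glue (ex m))) (a m.+1)) < 0.
Proof.
move=> mk. case: (entry_side mk) => tau [/andP[t0 t1] ha].
have -> : cross d (psub (side_start (glue (ex m))) (a m.+1)) = tau * cross (side_vec (glue (ex m))) d.
  by rewrite ha /cross /psub /padd /pscale /=; ring.
by rewrite pmulr_rlt0 //; apply: entry_cross.
Qed.

Lemma ha_end m : (m.+1 < k)%N -> 0 < cross d (psub (side_end (glue (ex m))) (a m.+1)).
Proof.
move=> mk. case: (entry_side mk) => tau [/andP[t0 t1] ha].
have -> : cross d (psub (side_end (glue (ex m))) (a m.+1)) = - ((1 - tau) * cross (side_vec (glue (ex m))) d).
  by rewrite ha /side_vec /cross /psub /padd /pscale /=; ring.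
rewrite oppr_gt0 pmulr_rlt0; [exact: entry_cross | lra].
Qed.

Lemma same_corner p q : P p = P q ->
  ((seg_positive k ex p /\ seg_positive k ex q) \/ (seg_negative k ex p /\ seg_negative k ex q)) ->
  ex p.-1 = ex q.-1.
Proof.
move=> hP H.
have [p0 pk q0 qk] : [/\ (0 < p)%N, (p.+1 < k)%N, (0 < q)%N & (q.+1 < k)%N].
  by case: H => [[[? ? _] [? ? _]]|[[? ? _] [? ? _]]].
have pk1 : (p.-1.+1 < k)%N by rewrite prednK // ltnW.
have qk1 : (q.-1.+1 < k)%N by rewrite prednK // ltnW.
case: (sc_tr pk1) => _ _ Tp _. case: (sc_tr qk1) => _ _ Tq _.
rewrite prednK // in Tp. rewrite prednK // in Tq.
case: H => [[[_ _ Ep] [_ _ Eq]]|[[_ _ Ep] [_ _ Eq]]].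
- have : glue (ex p.-1) = glue (ex q.-1).
    apply: (side_unique HP1 (e := d)).
    + by rewrite -Tp -Tq.
    + exact: entry_cross pk1.
    + by rewrite -Ep; exact: exit_cross pk.
    + exact: entry_cross qk1.
    + by rewrite -Eq; exact: exit_cross qk.
  by move/(congr1 (@glue R X)); rewrite !glueK.
- have : sprev (glue (ex p.-1)) = sprev (glue (ex q.-1)).
    apply: (side_unique HP1 (e := pscale (-1) d)).
    + by rewrite /sprev /= -Tp -Tq.
    + by rewrite crossNr -Ep oppr_lt0; exact: exit_cross pk.
    + by rewrite snext_sprev crossNr oppr_gt0; exact: entry_cross pk1.
    + by rewrite crossNr -Eq oppr_lt0; exact: exit_cross qk.
    + by rewrite snext_sprev crossNr oppr_gt0; exact: entry_cross qk1.
  by move/(congr1 (@snext R X)); rewrite !snext_sprev => /(congr1 (@glue R X)); rewrite !glueK.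
Qed.

Lemma step_back m n : seg_adjacent k ex m -> seg_adjacent k ex n -> ex m = ex n ->
  ex m.-1 = ex n.-1.
Proof.
move=> hm hn E.
have DE : Dd m = Dd n by rewrite /Dd /w E.
case: hm => hm.
- have [_ h1] := pos_sign hm.
  case: hn => hn; last by have [_ h2] := neg_sign hn; exfalso; clear E; lra.
  case: hm => _ _ Em; case: hn => _ _ En.
  have : glue (ex m.-1) = glue (ex n.-1).
    by rewrite -(sprev_snext (glue (ex m.-1))) -Em E En sprev_snext.
  by move/(congr1 (@glue R X)); rewrite !glueK.
- have [_ h1] := neg_sign hm.
  case: hn => hn; first by have [_ h2] := pos_sign hn; exfalso; clear E; lra.
  case: hm => _ _ Em; case: hn => _ _ En.
  have : glue (ex m.-1) = glue (ex n.-1).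
    by rewrite -(snext_sprev (glue (ex m.-1))) -Em E En snext_sprev.
  by move/(congr1 (@glue R X)); rewrite !glueK.
Qed.

Lemma step_fwd m n : seg_adjacent k ex m.+1 -> seg_adjacent k ex n.+1 -> ex m = ex n ->
  ex m.+1 = ex n.+1.
Proof.
move=> hm hn E.
have DE : Dd m = Dd n by rewrite /Dd /w E.
case: hm => hm.
- have [h1 _] := pos_sign hm.
  case: hn => hn; last by have [h2 _] := neg_sign hn; move: h1 h2 => /= h1 h2; exfalso; clear E; lra.
  by case: hm => _ _ ->; case: hn => _ _ ->; rewrite /= E.
- have [h1 _] := neg_sign hm.
  case: hn => hn; first by have [h2 _] := pos_sign hn; move: h1 h2 => /= h1 h2; exfalso; clear E; lra.
  by case: hm => _ _ ->; case: hn => _ _ ->; rewrite /= E.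
Qed.

Lemma propagate i j p q : (0 < i)%N -> (i <= p)%N -> (p < q)%N -> (q <= j)%N ->
  (forall l, (i <= l <= j)%N -> seg_adjacent k ex l) -> ex p.-1 = ex q.-1 ->
  forall m, (i.-1 <= m)%N -> (m + (q - p) <= j)%N -> ex m = ex (m + (q - p))%N.
Proof.
move=> i0 ip pq qj H base.
have base' : ex p.-1 = ex (p.-1 + (q - p))%N.
  by rewrite base; congr ex; lia.
have back : forall r, (r <= p - i)%N -> ex (p.-1 - r)%N = ex (p.-1 - r + (q - p))%N.
  elim=> [|r IH] hr; first by rewrite subn0.
  have hr' : (r <= p - i)%N by lia.
  have := step_back (H (p.-1 - r)%N _) (H (p.-1 - r + (q - p))%N _) (IH hr').
  have -> : ((p.-1 - r).-1 = p.-1 - r.+1)%N by lia.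
  have -> : ((p.-1 - r + (q - p)).-1 = p.-1 - r.+1 + (q - p))%N by lia.
  apply; apply/andP; split; lia.
have fwd : forall r, (p.-1 + r + (q - p) <= j)%N -> ex (p.-1 + r)%N = ex (p.-1 + r + (q - p))%N.
  elim=> [|r IH] hr; first by rewrite addn0.
  have hr' : (p.-1 + r + (q - p) <= j)%N by lia.
  have := step_fwd (H (p.-1 + r)%N.+1 _) (H (p.-1 + r + (q - p))%N.+1 _) (IH hr').
  have -> : ((p.-1 + r).+1 = p.-1 + r.+1)%N by lia.
  have -> : ((p.-1 + r + (q - p)).+1 = p.-1 + r.+1 + (q - p))%N by lia.
  apply; apply/andP; split; lia.
move=> m h1 h2.
case: (leqP m p.-1) => hm.
  have := back (p.-1 - m)%N ltac:(lia).
  by have -> : (p.-1 - (p.-1 - m) = m)%N by lia.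
have := fwd (m - p.-1)%N ltac:(lia).
by have -> : (p.-1 + (m - p.-1) = m)%N by lia.
Qed.

Lemma b_eq m : (m < k)%N -> exists l, b m = padd (a m) (pscale l d).
Proof.
move=> mk; case: (sc_dir mk) => l [_ hl]; exists l.
by rewrite -hl /padd /psub; case: (a m) (b m) => [? ?] [? ?] /=; congr pair; ring.
Qed.

Lemma K_step m n : (n.+1 < k)%N -> (m.+1 < k)%N -> ex m = ex n ->
  cross d (psub (a n.+1) (a m.+1)) = cross d (psub (a n) (a m)).
Proof.
move=> nk mk E.
case: (sc_tr mk) => _ _ _ ham. case: (sc_tr nk) => _ _ _ han.
rewrite ham han E.
case: (b_eq (ltnW mk)) => l1 ->. case: (b_eq (ltnW nk)) => l2 ->.
rewrite /cross /psub /padd /pscale /=; ring.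
Qed.

Lemma K_all m0 dl r : (forall l, (m0 <= l < m0 + r)%N -> ex l = ex (l + dl)%N /\ ((l + dl).+1 < k)%N) ->
  cross d (psub (a (m0 + r + dl)%N) (a (m0 + r)%N)) = cross d (psub (a (m0 + dl)%N) (a m0)).
Proof.
elim: r => [|r IH] H; first by rewrite addn0.
have [E hk] := H (m0 + r)%N ltac:(apply/andP; split; lia).
have mk : ((m0 + r).+1 < k)%N by lia.
rewrite -IH; last by move=> l hl; apply: H; lia.
have := K_step hk mk E.
by rewrite addnS addSn.
Qed.

Lemma send_sprev (g : side X) : side_end (sprev g) = side_start g.
Proof. by case: g => j u; rewrite /side_end /side_start /sprev /= ord_predK. Qed.

Lemma start_sign m0 m1 : (m1.+1 < k)%N -> (m0 < m1)%N -> ex m0 = ex m1 ->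
  seg_adjacent k ex m1 -> ((0 < m0)%N -> ~ seg_adjacent k ex m0) ->
  (0 < Dd m0 -> 0 < cross d (psub (a m1) (a m0))) /\
  (Dd m0 < 0 -> cross d (psub (a m1) (a m0)) < 0).
Proof.
move=> m1k m01 E adj1 nadj0.
have m0k' : (m0.+1 < k)%N by lia.
have m0k : (m0 < k)%N by lia.
have k1 : (1 < k)%N by lia.
have DE : Dd m1 = Dd m0 by rewrite /Dd /w E.
have PE : P m0 = P m1.
  case: (sc_tr m0k') => T0 _ _ _; case: (sc_tr m1k) => T1 _ _ _. by rewrite -T0 -T1 E.
split => hD.
- have hp : seg_positive k ex m1.
    case: adj1 => // hn; have [_ h] := neg_sign hn; exfalso; clear E; lra.
  case: (hp) => m1p _ Em1.
  have m1k' : (m1.-1.+1 < k)%N by rewrite prednK // ltnW.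
  have Tm1 : P m1 = tag (glue (ex m1.-1)) by case: (sc_tr m1k') => _ _ T _; rewrite prednK in T.
  have h1 : cross d (psub (side_start (glue (ex m1.-1))) (a m1)) < 0.
    by have := ha_start m1k'; rewrite prednK.
  have h0 : 0 <= cross d (psub (side_start (glue (ex m1.-1))) (a m0)).
    rewrite leNgt; apply/negP => hlt.
    have Ht0 : tag (glue (ex m1.-1)) = P m0 by rewrite PE Tm1.
    have hE : 0 < cross d (psub (side_end (glue (ex m1.-1))) (a m0)).
      have -> : side_end (glue (ex m1.-1)) = side_start (ex m0) by rewrite E Em1.
      exact: hb_start.
    have hint := enter_at k1 m0k Ht0 (entry_cross m1k') hlt hE.
    case: (a_side m0k Ht0 hint) => m0p es.
    apply: (nadj0 m0p); left; split => //. by rewrite E Em1 es.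
  have -> : cross d (psub (a m1) (a m0)) = cross d (psub (side_start (glue (ex m1.-1))) (a m0))
     - cross d (psub (side_start (glue (ex m1.-1))) (a m1)) by rewrite /cross /psub /=; ring.
  lra.
- have hn : seg_negative k ex m1.
    case: adj1 => // hp; have [_ h] := pos_sign hp; exfalso; clear E; lra.
  case: (hn) => m1p _ Em1.
  have m1k' : (m1.-1.+1 < k)%N by rewrite prednK // ltnW.
  have Tm1 : P m1 = tag (glue (ex m1.-1)) by case: (sc_tr m1k') => _ _ T _; rewrite prednK in T.
  have h1 : 0 < cross d (psub (side_end (glue (ex m1.-1))) (a m1)).
    by have := ha_end m1k'; rewrite prednK.
  have h0 : cross d (psub (side_end (glue (ex m1.-1))) (a m0)) <= 0.
    rewrite leNgt; apply/negP => hgt.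
    have Ht0 : tag (glue (ex m1.-1)) = P m0 by rewrite PE Tm1.
    have hS : cross d (psub (side_start (glue (ex m1.-1))) (a m0)) < 0.
      have -> : side_start (glue (ex m1.-1)) = side_end (ex m0) by rewrite E Em1 send_sprev.
      exact: hb_end.
    have hint := enter_at k1 m0k Ht0 (entry_cross m1k') hS hgt.
    case: (a_side m0k Ht0 hint) => m0p es.
    apply: (nadj0 m0p); right; split => //. by rewrite E Em1 es.
  have -> : cross d (psub (a m1) (a m0)) = cross d (psub (side_end (glue (ex m1.-1))) (a m0))
     - cross d (psub (side_end (glue (ex m1.-1))) (a m1)) by rewrite /cross /psub /=; ring.
  lra.
Qed.

Lemma end_sign n n' : (n < n')%N -> (n'.+1 < k)%N -> ex n = ex n' -> seg_adjacent k ex n.+1 ->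
  ((n'.+2 < k)%N -> ~ seg_adjacent k ex n'.+1) ->
  (0 < Dd n' -> 0 < cross d (psub (a n'.+1) (a n.+1))) /\
  (Dd n' < 0 -> cross d (psub (a n'.+1) (a n.+1)) < 0).
Proof.
move=> nn' n'k E adj1 nadj.
have nk : (n.+1 < k)%N by lia.
have k1 : (1 < k)%N by lia.
have n3k : (n'.+1 < k)%N by [].
have DE : Dd n = Dd n' by rewrite /Dd /w E.
have PE : P n.+1 = P n'.+1.
  case: (sc_tr nk) => _ _ T0 _; case: (sc_tr n'k) => _ _ T1 _. by rewrite T0 T1 E.
split => hD.
- have hn : seg_negative k ex n.+1.
    case: adj1 => // hp; have [h _] := pos_sign hp; exfalso; clear E; move: h => /= h; lra.
  case: (hn) => _ n2k En. rewrite /= in En.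
  have TF : tag (ex n.+1) = P n'.+1 by case: (sc_tr n2k) => T _ _ _; rewrite T PE.
  have h1 : 0 < cross d (psub (side_start (ex n.+1)) (a n.+1)) by apply: hb_start.
  have h0 : cross d (psub (side_start (ex n.+1)) (a n'.+1)) <= 0.
    rewrite leNgt; apply/negP => hgt.
    have hE : cross d (psub (side_end (ex n.+1)) (a n'.+1)) < 0.
      have -> : side_end (ex n.+1) = side_start (glue (ex n')) by rewrite En send_sprev E.
      exact: ha_start n'k.
    have hb := exit_at k1 n3k TF (exit_cross n2k) hgt hE.
    case: (b_side n3k TF hb) => n4k eF.
    apply: (nadj n4k); right; split => //. by rewrite /= -eF En E.
  have -> : cross d (psub (a n'.+1) (a n.+1)) = cross d (psub (side_start (ex n.+1)) (a n.+1))
     - cross d (psub (side_start (ex n.+1)) (a n'.+1)) by rewrite /cross /psub /=; ring.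
  lra.
- have hp : seg_positive k ex n.+1.
    case: adj1 => // hn; have [h _] := neg_sign hn; exfalso; clear E; move: h => /= h; lra.
  case: (hp) => _ n2k En. rewrite /= in En.
  have TF : tag (ex n.+1) = P n'.+1 by case: (sc_tr n2k) => T _ _ _; rewrite T PE.
  have h1 : cross d (psub (side_end (ex n.+1)) (a n.+1)) < 0 by apply: hb_end.
  have h0 : 0 <= cross d (psub (side_end (ex n.+1)) (a n'.+1)).
    rewrite leNgt; apply/negP => hlt.
    have hS : 0 < cross d (psub (side_start (ex n.+1)) (a n'.+1)).
      have -> : side_start (ex n.+1) = side_end (glue (ex n')) by rewrite En E.
      exact: ha_end n'k.
    have hb := exit_at k1 n3k TF (exit_cross n2k) hS hlt.
    case: (b_side n3k TF hb) => n4k eF.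
    apply: (nadj n4k); left; split => //. by rewrite /= -eF En E.
  have -> : cross d (psub (a n'.+1) (a n.+1)) = cross d (psub (side_end (ex n.+1)) (a n.+1))
     - cross d (psub (side_end (ex n.+1)) (a n'.+1)) by rewrite /cross /psub /=; ring.
  lra.
Qed.

Lemma main_in (i j : nat) : maximal_adjacent_run k ex i j ->
  (exists p q : nat,
     [/\ (i <= p <= j)%N, (i <= q <= j)%N, p <> q, P p = P q &
         ((seg_positive k ex p /\ seg_positive k ex q) \/
          (seg_negative k ex p /\ seg_negative k ex q))]) ->
  ~~ odd (j.+1 - i).
Proof.
move=> [ij jk Hrun Hi Hj] [p [q [hp hq pq PE sgn]]].
have ai := Hrun i ltac:(by rewrite leqnn ij).
have i0 : (0 < i)%N by case: ai => [[]|[]].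
have aj := Hrun j ltac:(by rewrite ij leqnn).
have j1k : (j.+1 < k)%N by case: aj => [[]|[]].
wlog lpq : p q hp hq pq PE sgn / (p < q)%N.
  move=> Hw. case: (ltngtP p q) => h.
  - exact: (Hw p q).
  - apply: (Hw q p) => //. by move=> e; apply: pq.
    by case: sgn => [[? ?]|[? ?]]; [left|right].
  - by case: pq.
have base := same_corner PE sgn.
move: hp hq => /andP[ip pj] /andP[iq qj].
have prop := propagate i0 ip lpq qj Hrun base.
set dl := (q - p)%N in prop.
have dl1 : (0 < dl)%N by rewrite /dl subn_gt0.
have dlj : (dl <= j - i)%N by rewrite /dl; lia.
have E0 : ex i.-1 = ex (i.-1 + dl)%N by apply: prop => //; lia.
have [S1 S2] := start_sign (m0 := i.-1) (m1 := (i.-1 + dl)%N) ltac:(lia) ltac:(lia) E0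
  (Hrun (i.-1 + dl)%N ltac:(apply/andP; split; lia)) (fun h => Hi i0).
have E1 : ex (j - dl)%N = ex j.
  by have := prop (j - dl)%N ltac:(lia) ltac:(lia); rewrite subnK //; lia.
have [T1 T2] := end_sign (n := (j - dl)%N) (n' := j) ltac:(lia) j1k E1
  (Hrun (j - dl)%N.+1 ltac:(apply/andP; split; lia)) (fun h => Hj (ltnW h)).
have KE : cross d (psub (a j.+1) (a (j - dl).+1)) = cross d (psub (a (i.-1 + dl)%N) (a i.-1)).
  have := K_all (m0 := i.-1) (dl := dl) (r := ((j - dl).+1 - i.-1)%N).
  have -> : (i.-1 + ((j - dl).+1 - i.-1) + dl)%N = j.+1 by lia.
  have -> : (i.-1 + ((j - dl).+1 - i.-1))%N = (j - dl).+1 by lia.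
  apply => l hl. split; first by apply: prop; lia.
  lia.
have Di : Dd i.-1 != 0.
  by case: ai => [/pos_sign [h _]|/neg_sign [h _]]; [exact: ltr0_neq0 | exact: lt0r_neq0].
have Dj : Dd j != 0.
  by case: aj => [/pos_sign [_ h]|/neg_sign [_ h]]; [exact: lt0r_neq0 | exact: ltr0_neq0].
have same : (0 < Dd j) = (0 < Dd i.-1).
  case: (ltgtP (Dd i.-1) 0) => hi; last by move: Di; rewrite hi eqxx.
  - have := S2 hi. rewrite -KE => hK.
    case: (ltgtP (Dd j) 0) => hj; last by move: Dj; rewrite hj eqxx.
      by [].
    by have := T1 hj; lra.
  - have := S1 hi. rewrite -KE => hK.
    case: (ltgtP (Dd j) 0) => hj; last by move: Dj; rewrite hj eqxx.
      by have := T2 hj; lra.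
    by [].
have := parity (i := i) (n := (j - i)%N) (fun l hl => Hrun l ltac:(lia)).
rewrite subnKC // same => /eqP.
by rewrite (subSn ij); case: (0 < Dd i.-1); case: (odd (j - i).+1).
Qed.

End Main.

Theorem mainTheorem9 (R : realType) (X : polysurf R)
  (k : nat) (P : nat -> 'I_(np X)) (a b : nat -> pt R) (ex : nat -> side X)
  (d : pt R) (i j : nat) :
  valid_gluing X -> P1 X -> P2 X ->
  saddle_connection k P a b ex d ->
  ~ sc_is_side k P a b -> ~ sc_is_diagonal k P a b ->
  maximal_adjacent_run k ex i j ->
  (exists p q : nat,
     [/\ (i <= p <= j)%N, (i <= q <= j)%N, p <> q, P p = P q &
         ((seg_positive k ex p /\ seg_positive k ex q) \/
          (seg_negative k ex p /\ seg_negative k ex q))]) ->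
  ~~ odd (j.+1 - i).
Proof.
move=> HG HP1 _ HSC _ _ Hrun Hex.
exact: (main_in HG HP1 HSC Hrun Hex).
Qed.
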